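(* Under the rank assumptions stated in the context, let $S_{jkl}:=\{y+s v_j+t v_k+r v_l: y\in \mathrm{relint}(F_{jkl}), s> 0, t> 0,r>0\}$ for $1\leq j< k<l\leq d$ such that $F_{jkl}$ is a facet of $F_{jk}$. Then $S_{jkl}\cap S_{j'k'l'}=\emptyset$ for any $\{ j,k,l \}\neq \{ j',k' ,l'\}$.
   Context: Let $d\geq 3$, let $v_1,\dots,v_d\in\mathbb{R}^d$ be distinct unit vectors and $b_1,\dots,b_d$ real numbers, and let $A=\{x\in \mathbb{R}^d:\ x\cdot v_j\leq b_j\ \text{for}\ j=1,\dots, d\}$ be a (possibly unbounded) convex polytope. For each $j$, $F_j$ denotes the (possible) facet of $A$ corresponding to $v_j$ (the part of $A$ on the hyperplane $\{x: x\cdot v_j=b_j\}$); $F_{jk}=F_{kj}$ denotes the facet of $F_j$ created by intersecting with $F_k$, $k\neq j$; and $F_{jkl}$ (invariant under permutation of its indices) denotes the facet of the $(d-2)$-dimensional polytope $F_{jk}$ created by intersecting with $F_l$, $l\neq j,k$; $\mathrm{relint}$ denotes relative interior. The following rank assumptions are imposed: for any $1\leq j<k\leq d$, if $\operatorname{rank} \begin{bmatrix} v_j & v_k \end{bmatrix}<2$, then $\operatorname{rank} \begin{bmatrix} v_j & v_k\end{bmatrix}<\operatorname{rank} \begin{bmatrix} v_j & v_k\\ b_j&b_k \end{bmatrix}$; for any $1\leq j<k<l\leq d$, if $\operatorname{rank} \begin{bmatrix} v_j & v_k & v_l\end{bmatrix}<3$, then $\operatorname{rank} \begin{bmatrix}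 v_j & v_k & v_l\end{bmatrix}<\operatorname{rank} \begin{bmatrix} v_j & v_k & v_l\\ b_j&b_k&b_l \end{bmatrix}$; for any $1\leq j<k<l<s\leq d$, if $\operatorname{rank} \begin{bmatrix} v_j & v_k & v_l& v_s\end{bmatrix}<4$, then $\operatorname{rank} \begin{bmatrix} v_j & v_k & v_l& v_s\end{bmatrix}<\operatorname{rank} \begin{bmatrix} v_j & v_k & v_l& v_s\\ b_j&b_k&b_l&b_s \end{bmatrix}$. *)

(* Defs.v *)
From HB Require Import structures.
From mathcomp Require Import all_boot all_order all_algebra.
From mathcomp Require Import reals.
Set Implicit Arguments. Unset Strict Implicit. Unset Printing Implicit Defensive.
Import Order.TTheory GRing.Theory Num.Theory.
Local Open Scope ring_scope.

Section Defs.
Variables (R : realType) (d : nat).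
Notation vec := 'rV[R]_d.

Definition dotv (x y : vec) : R := \sum_(i < d) x 0 i * y 0 i.

Definition polyA (v : 'I_d -> vec) (b : 'I_d -> R) (x : vec) : Prop :=
  forall j, dotv x (v j) <= b j.

Definition face1 v b (j : 'I_d) (x : vec) : Prop :=
  polyA v b x /\ dotv x (v j) = b j.
Definition face2 v b (j k : 'I_d) (x : vec) : Prop :=
  face1 v b j x /\ face1 v b k x.
Definition face3 v b (j k l : 'I_d) (x : vec) : Prop :=
  face2 v b j k x /\ face1 v b l x.

Definition aff (S : vec -> Prop) (x : vec) : Prop :=
  exists n (p : 'I_n -> vec) (c : 'I_n -> R),
    (forall i, S (p i)) /\ \sum_(i < n) c i = 1 /\ x = \sum_(i < n) c i *: p i.

Definition diffmx (S : vec -> Prop) m (M : 'M[R]_(m, d)) : Prop :=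
  forall i, exists x y, S x /\ S y /\ row i M = x - y.

(* S is nonempty and its affine hull has dimension n *)
Definition affdim (S : vec -> Prop) (n : nat) : Prop :=
  (exists x, S x) /\
  (exists M : 'M[R]_(n, d), diffmx S M /\ \rank M = n) /\
  (forall m (M : 'M[R]_(m, d)), diffmx S M -> (\rank M <= n)%N).

Definition relint (S : vec -> Prop) (x : vec) : Prop :=
  S x /\ exists e : R, 0 < e /\
    forall y, aff S y -> (forall i, `|y 0 i - x 0 i| < e) -> S y.

(* matrices [v_{s 0} ... v_{s (n-1)}] (stored as rows; rank is transpose-invariant)
   and the same with the row of b's appended *)
Definition Vmat (v : 'I_d -> vec) n (s : 'I_n -> 'I_d) : 'M[R]_(n, d) :=
  \matrix_(i < n, c < d) v (s i) 0 c.
Definition Vbmat (v : 'I_d -> vec) (b : 'I_d -> R) n (s : 'I_n -> 'I_d)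
  : 'M[R]_(n, d + 1) :=
  row_mx (Vmat v s) (\col_(i < n) b (s i)).

Definition rank_assumption (v : 'I_d -> vec) (b : 'I_d -> R) (n : nat) : Prop :=
  forall s : 'I_n -> 'I_d, (forall p q : 'I_n, (p < q)%N -> (s p < s q)%N) ->
    (\rank (Vmat v s) < n)%N -> (\rank (Vmat v s) < \rank (Vbmat v b s))%N.

Definition Sset v b (j k l : 'I_d) (z : vec) : Prop :=
  exists y s t r, relint (face3 v b j k l) y /\ 0 < s /\ 0 < t /\ 0 < r /\
    z = y + s *: v j + t *: v k + r *: v l.

Definition facet3 v b (j k l : 'I_d) : Prop :=
  affdim (face2 v b j k) (d - 2) /\ affdim (face3 v b j k l) (d - 3).
End Defs.

(* Main.v *)
Require Import Defs.
From HB Require Import structures.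
From mathcomp Require Import all_boot all_order all_algebra.
From mathcomp Require Import reals.
From mathcomp Require Import ring lra zify.
Import Order.TTheory GRing.Theory Num.Theory.
Local Open Scope ring_scope.

Section H.
Variables (R : realType) (d : nat).
Notation vec := 'rV[R]_d.
Implicit Types x y w : vec.

Lemma dotvC x y : dotv x y = dotv y x.
Proof. by apply: eq_bigr => i _; rewrite mulrC. Qed.
Lemma dotvDl x y w : dotv (x + y) w = dotv x w + dotv y w.
Proof. by rewrite /dotv -big_split; apply: eq_bigr => i _; rewrite !mxE mulrDl. Qed.
Lemma dotvZl (a : R) x w : dotv (a *: x) w = a * dotv x w.
Proof. by rewrite /dotv mulr_sumr; apply: eq_bigr => i _; rewrite !mxE mulrA. Qed.
Lemma dotvNl x w : dotv (- x) w = - dotv x w.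
Proof. by rewrite -scaleN1r dotvZl mulN1r. Qed.
Lemma dotvBl x y w : dotv (x - y) w = dotv x w - dotv y w.
Proof. by rewrite dotvDl dotvNl. Qed.
Lemma dotvBr x y w : dotv w (x - y) = dotv w x - dotv w y.
Proof. by rewrite !(dotvC w) dotvBl. Qed.
Lemma dotv_eq0 w : dotv w w <= 0 -> w = 0.
Proof.
move=> h.
have mul_self_ge0 : forall a : R, 0 <= a * a by move=> a; rewrite -expr2 sqr_ge0.
have h0 : dotv w w = 0.
  by apply/eqP; rewrite eq_le h /dotv sumr_ge0 // => i _; rewrite mul_self_ge0.
apply/matrixP => a c; rewrite ord1 mxE.
have := psumr_eq0P (fun i _ => mul_self_ge0 (w 0 i)) h0 (i := c) isT.
by move/eqP; rewrite mulf_eq0 orbb => /eqP.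
Qed.

Lemma key (v : 'I_d -> vec) (b : 'I_d -> R) n (s : 'I_n -> 'I_d)
  (F : vec -> Prop) :
  (forall p q : 'I_n, (p < q)%N -> (s p < s q)%N) ->
  rank_assumption v b n ->
  (forall m x, F x -> dotv x (v (s m)) = b (s m)) ->
  forall y0, F y0 ->
  forall m (M : 'M[R]_(m, d)), Defs.diffmx F M -> (\rank M + n <= d)%N.
Proof.
move=> sinc ra hF y0 Fy0 m M dM.
have rV : \rank (Vmat v s) = n.
  apply/eqP; rewrite eqn_leq rank_leq_row /=; rewrite leqNgt; apply/negP => lt.
  have := ra s sinc lt.
  have -> : Vbmat v b s = Vmat v s *m row_mx 1%:M (y0^T).
    rewrite mul_mx_row mulmx1 /Vbmat; congr row_mx.
    apply/matrixP => i c; rewrite !mxE ord1 -(hF i y0 Fy0) dotvC.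
    by apply: eq_bigr => a _; rewrite !mxE.
  by rewrite ltnNge mxrankM_maxl.
have MV : M *m (Vmat v s)^T = 0.
  apply/matrixP => a c; rewrite !mxE.
  have [x [y [Fx [Fy ra']]]] := dM a.
  transitivity (dotv (row a M) (v (s c))); last by rewrite ra' dotvBl !hF // subrr.
  by rewrite /dotv; apply: eq_bigr => i _; rewrite !mxE.
have := mxrank_mul_min M (Vmat v s)^T.
by rewrite MV mxrank0 mxrank_tr rV leqn0 subn_eq0.
Qed.
Lemma relint_active (v : 'I_d -> vec) (b : 'I_d -> R) (F : vec -> Prop) y i :
  relint F y -> (forall x, F x -> polyA v b x) -> dotv y (v i) = b i ->
  forall x, F x -> dotv x (v i) = b i.
Proof.
move=> [Fy [e [e0 he]]] FA hy x Fx.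
set w := y - x.
set K := 1 + \sum_(c < d) `|w 0 c|.
have Kge : forall c, `|w 0 c| <= K.
  move=> c; rewrite /K (bigD1 c) //=.
  have : 0 <= \sum_(i < d | i != c) `|w 0 i| by rewrite sumr_ge0.
  have : 0 <= `|w 0 c| by [].
  lra.
have K0 : 0 < K by rewrite /K ltr_pwDl // sumr_ge0.
set eps := e / (2 * K).
have eps0 : 0 < eps by rewrite divr_gt0 // mulr_gt0.
have epsK : eps * K < e.
  have -> : eps * K = e / 2.
    by rewrite /eps; field; rewrite gt_eqF.
  lra.
set y2 := (1 + eps) *: y - eps *: x.
have ay2 : aff F y2.
  exists 2%N, (fun m : 'I_2 => if m == ord0 then y else x),
    (fun m : 'I_2 => if m == ord0 then 1 + eps else - eps).
  split; first by move=> m; case: ifP.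
  rewrite !big_ord_recl !big_ord0 /=; split; first by rewrite addr0 addrK.
  by rewrite addr0 scaleNr.
have Fy2 : F y2.
  apply: he => // c.
  have -> : y2 0 c - y 0 c = eps * w 0 c.
    by rewrite /y2 /w !mxE mulrDl mul1r mulrBr; ring.
  by rewrite normrM gtr0_norm // (le_lt_trans _ epsK) // ler_pM2l.
have := FA _ Fy2 i; rewrite /y2 dotvBl !dotvZl hy => h1.
have h2 := FA _ Fx i.
apply/eqP; rewrite eq_le h2 /=.
have : eps * (b i - dotv x (v i)) <= 0.
  by move: h1; rewrite mulrBr mulrDl mul1r; lra.
by rewrite pmulr_rle0 // subr_le0.
Qed.
Lemma key4 (v : 'I_d -> vec) (b : 'I_d -> R) (F : vec -> Prop) (a0 a1 a2 a3 : 'I_d) :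
  (a0 < a1)%N -> (a1 < a2)%N -> (a2 < a3)%N ->
  rank_assumption v b 4 ->
  (forall x, F x -> [/\ dotv x (v a0) = b a0, dotv x (v a1) = b a1,
                       dotv x (v a2) = b a2 & dotv x (v a3) = b a3]) ->
  forall y0, F y0 ->
  forall m (M : 'M[R]_(m, d)), Defs.diffmx F M -> (\rank M + 4 <= d)%N.
Proof.
move=> h01 h12 h23 ra hF.
pose s := fun m : 'I_4 => tnth [tuple a0; a1; a2; a3] m.
apply: (@key v b 4 s F) => //.
- have h02 := ltn_trans h01 h12; have h13 := ltn_trans h12 h23.
  have h03 := ltn_trans h02 h23.
  by case=> [[|[|[|[|?]]]] ?] [[|[|[|[|?]]]] ?] //=; rewrite /s /tnth /=.
- move=> m x /hF [e0 e1 e2 e3].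
  by case: m => [[|[|[|[|?]]]] ?] //=; rewrite /s /tnth /=.
Qed.

Lemma active_in (v : 'I_d -> vec) (b : 'I_d -> R) (j k l i : 'I_d) y :
  (3 <= d)%N -> (j < k)%N -> (k < l)%N ->
  affdim (face3 v b j k l) (d - 3) -> relint (face3 v b j k l) y ->
  dotv y (v i) = b i -> rank_assumption v b 4 -> i \in [set j; k; l].
Proof.
move=> d3 hjk hkl [_ [[M [dM rM]] _]] ry hyi ra.
rewrite !inE; apply/negPn/negP; rewrite !negb_or => /andP[/andP[nij nik] nil].
have FA : forall x, face3 v b j k l x -> polyA v b x by move=> x [[[]]].
have hi := @relint_active v b _ y i ry FA hyi.
have [Fy _] := ry.
have hF : forall x, face3 v b j k l x -> [/\ dotv x (v i) = b i,
   dotv x (v j) = b j, dotv x (v k) = b k & dotv x (v l) = b l].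
  by move=> x Fx; have := hi x Fx; case: Fx => [[[_ ?] [_ ?]] [_ ?]].
suff : (\rank M + 4 <= d)%N by rewrite rM; lia.
have nij' : val i != val j by [].
have nik' : val i != val k by [].
have nil' : val i != val l by [].
case: (ltngtP i j) => [ij|ji|/val_inj e]; last by rewrite e eqxx in nij.
  apply: (@key4 v b _ i j k l _ _ _ ra _ y Fy _ M dM) => //.
case: (ltngtP i k) => [ik|ki|/val_inj e]; last by rewrite e eqxx in nik.
  apply: (@key4 v b _ j i k l _ _ _ ra _ y Fy _ M dM) => //.
  by move=> x /hF [*].
case: (ltngtP i l) => [il|li|/val_inj e]; last by rewrite e eqxx in nil.
  apply: (@key4 v b _ j k i l _ _ _ ra _ y Fy _ M dM) => //.
  by move=> x /hF [*].
apply: (@key4 v b _ j k l i _ _ _ ra _ y Fy _ M dM) => //.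
by move=> x /hF [*].
Qed.
Lemma proj_le (v : 'I_d -> vec) (b : 'I_d -> R) (j k l : 'I_d) y z s t r x :
  face3 v b j k l y -> 0 < s -> 0 < t -> 0 < r ->
  z = y + s *: v j + t *: v k + r *: v l -> polyA v b x ->
  dotv (z - y) (x - y) <= 0.
Proof.
move=> [[[_ ej] [_ ek]] [_ el]] s0 t0 r0 ez px.
have -> : z - y = s *: v j + t *: v k + r *: v l.
  by apply/eqP; rewrite subr_eq ez [X in _ == X]addrC !addrA.
have hm : forall (a : R) (i : 'I_d), 0 < a -> dotv y (v i) = b i ->
    a * dotv (v i) (x - y) <= 0.
  move=> a i a0 ei; rewrite pmulr_rle0 // dotvBr !(dotvC (v i)) ei subr_le0.
  exact: px.
have := hm _ _ s0 ej; have := hm _ _ t0 ek; have := hm _ _ r0 el.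
rewrite !dotvDl !dotvZl; lra.
Qed.
End H.

Theorem lemma6p4 (R : realType) (d : nat) (v : 'I_d -> 'rV[R]_d) (b : 'I_d -> R) :
  (3 <= d)%N ->
  (forall j, dotv (v j) (v j) = 1) ->
  injective v ->
  rank_assumption v b 2 -> rank_assumption v b 3 -> rank_assumption v b 4 ->
  forall j k l j' k' l' : 'I_d,
    (j < k)%N -> (k < l)%N -> (j' < k')%N -> (k' < l')%N ->
    facet3 v b j k l -> facet3 v b j' k' l' ->
    [set j; k; l] != [set j'; k'; l'] ->
    forall z, ~ (Sset v b j k l z /\ Sset v b j' k' l' z).
Proof.
move=> d3 _ _ _ _ ra j k l j' k' l' hjk hkl hjk' hkl' [_ f1] [_ f2] neq z
  [[y [s [t [r [ry [s0 [t0 [r0 ez]]]]]]]] [y' [s' [t' [r' [ry' [s0' [t0' [r0' ez']]]]]]]]].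
have Fy := ry.1; have Fy' := ry'.1.
have pA : forall j k l w, face3 v b j k l w -> polyA v b w by move=> ? ? ? ? [[[]]].
have yy : y = y'.
  apply/eqP; rewrite -subr_eq0; apply/eqP/dotv_eq0.
  have h1 := @proj_le _ _ _ _ _ _ _ _ _ _ _ _ _ Fy s0 t0 r0 ez (pA _ _ _ _ Fy').
  have h2 := @proj_le _ _ _ _ _ _ _ _ _ _ _ _ _ Fy' s0' t0' r0' ez' (pA _ _ _ _ Fy).
  move: h1 h2; rewrite !dotvBl !dotvBr (dotvC _ _ y y') (dotvC _ _ z y) (dotvC _ _ z y').
  lra.
subst y'.
have sub1 : [set j'; k'; l'] \subset [set j; k; l].
  have [[[_ e1] [_ e2]] [_ e3]] := Fy'.
  apply/subsetP => a; rewrite !inE => /orP[/orP[]|] /eqP ->.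
  - by have := @active_in _ _ _ _ _ _ _ _ _ d3 hjk hkl f1 ry e1 ra; rewrite !inE.
  - by have := @active_in _ _ _ _ _ _ _ _ _ d3 hjk hkl f1 ry e2 ra; rewrite !inE.
  - by have := @active_in _ _ _ _ _ _ _ _ _ d3 hjk hkl f1 ry e3 ra; rewrite !inE.
have sub2 : [set j; k; l] \subset [set j'; k'; l'].
  have [[[_ e1] [_ e2]] [_ e3]] := Fy.
  apply/subsetP => a; rewrite !inE => /orP[/orP[]|] /eqP ->.
  - by have := @active_in _ _ _ _ _ _ _ _ _ d3 hjk' hkl' f2 ry' e1 ra; rewrite !inE.
  - by have := @active_in _ _ _ _ _ _ _ _ _ d3 hjk' hkl' f2 ry' e2 ra; rewrite !inE.
  - by have := @active_in _ _ _ _ _ _ _ _ _ d3 hjk' hkl' f2 ry' e3 ra; rewrite !inE.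
by move/negP: neq; apply; rewrite eqEsubset sub1 sub2.
Qed.
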